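(* Let $\mathbb A$ be a unital associative algebra over a field of characteristic zero and $X,Y\in\mathbb A$. Then in $\mathbb A[[t]]$ $$e^{tX}e^{tY}=1_{\mathbb A}+\sum_{r=1}^\infty\sum_{n_1,\dots,n_r=1}^\infty\frac{1}{n_r(n_r+n_{r-1})\cdots(n_r+\cdots+n_1)}\,D_{n_1}\cdots D_{n_r},$$ where $D_n=\frac{t^n}{(n-1)!}\mathrm{ad}_X^{n-1}(X+Y)$ for each $n\ge1$.
   Context: $\mathrm{ad}_AB=AB-BA$; the sum converges $t$-adically since $D_n\in t^n\mathbb A$. *)

(* Defs.v *)
From HB Require Import structures.
From mathcomp Require Import all_boot all_order all_algebra.
Set Implicit Arguments. Unset Strict Implicit. Unset Printing Implicit Defensive.
Import Order.TTheory GRing.Theory Num.Theory.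
Local Open Scope ring_scope.

Section FPS.
Variables (F : fieldType) (A : algType F).

(* A[[t]]: the coefficient of t^n is (f n). *)
Definition fps := nat -> A.

Definition fps_one : fps := fun n => if n == 0%N then 1 else 0.
Definition fps_add (f g : fps) : fps := fun n => f n + g n.

(* Cauchy product in A[[t]] (t central, A possibly noncommutative). *)
Definition fps_mul (f g : fps) : fps :=
  fun n => \sum_(i < n.+1) f i * g (n - i)%N.

Definition fps_prod (s : seq fps) : fps := foldr fps_mul fps_one s.

Definition fps_scale (c : F) (f : fps) : fps := fun n => c *: f n.

Definition fps_exp (X : A) : fps := fun n => (n`!%:R)^-1 *: X ^+ n.

Definition ad (X B : A) : A := X * B - B * X.

Definition Dn (X Y : A) (n : nat) : fps :=
  fun m => if m == n then ((n.-1)`!%:R)^-1 *: iter n.-1 (ad X) (X + Y) else 0.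

(* n_r (n_r + n_{r-1}) ... (n_r + ... + n_1) for s = [:: n_1; ...; n_r] *)
Definition denom (s : seq nat) : nat := \prod_(i < size s) sumn (drop i s).

Definition valid_index (s : seq nat) : bool := (size s > 0)%N && all (fun n => n > 0)%N s.

Definition bch_term (X Y : A) (s : seq nat) : fps :=
  fps_scale ((denom s)%:R)^-1 (fps_prod (map (Dn X Y) s)).

(* t-adic summation: the family (F_i)_{i in P} is summable with sum S iff for
   every N only finitely many F_i have a nonzero coefficient of degree <= N,
   and the coefficient of t^N of S is the (finite) sum of those of the F_i. *)
Definition tadic_sum_to (I : eqType) (P : pred I) (Fam : I -> fps) (S : fps) : Prop :=
  forall N : nat, exists fin : seq I,
    [/\ uniq fin, all P fin,
        (forall i, P i -> i \notin fin -> forall k, (k <= N)%N -> Fam i k = 0)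
      & S N = \sum_(i <- fin) Fam i N].

End FPS.

(* Main.v *)
Require Import Defs.
From Stdlib Require Import FunctionalExtensionality.
From HB Require Import structures.
From mathcomp Require Import all_boot all_order all_algebra zify.
Set Implicit Arguments. Unset Strict Implicit. Unset Printing Implicit Defensive.
Import GRing.Theory.
Local Open Scope ring_scope.

Fixpoint comps (f n : nat) : seq (seq nat) :=
  match f with
  | 0 => if n == 0%N then [:: [::]] else [::]
  | f'.+1 => if n == 0%N then [:: [::]] else
      [seq m :: s | m <- iota 1 n, s <- comps f' (n - m)]
  end.

Lemma comps_sound f n s : s \in comps f n -> all (fun k => 0 < k)%N s && (sumn s == n).
Proof.
elim: f n s => [|f IH] n s /=.
  by case: n => [|n] //=; rewrite inE => /eqP ->.
case: n => [|n]; first by rewrite inE => /eqP ->.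
move=> /allpairsPdep [m [s' [hm hs' ->]]].
move: hm; rewrite mem_iota => /andP [m1 m2].
have /andP [a /eqP e] := IH _ _ hs'.
by rewrite /= m1 a /= e; apply/eqP; lia.
Qed.

Lemma comps_complete f n s : (n <= f)%N -> all (fun k => 0 < k)%N s -> sumn s = n ->
  s \in comps f n.
Proof.
elim: f n s => [|f IH] n s.
  rewrite leqn0 => /eqP -> /=.
  by case: s => [|x s] //= /andP [hx _]; lia.
case: n => [|n] hn.
  by case: s => [|x s] //= /andP [hx _]; lia.
have -> : comps f.+1 n.+1 = [seq m :: s | m <- iota 1 n.+1, s <- comps f (n.+1 - m)] by [].
case: s => [|x s] hall e; first by [].
move/andP: hall => [hx hs]; rewrite /= in e.
apply/allpairsPdep; exists x, s; split => //.
  rewrite mem_iota; apply/andP; split => //; lia.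
apply: IH => //; lia.
Qed.

Lemma comps_uniq f n : uniq (comps f n).
Proof.
elim: f n => [|f IH] n /=; first by case: n.
case: n => [|n] //.
apply: allpairs_uniq_dep; first exact: iota_uniq.
  by move=> m _; apply: IH.
by move=> [m1 s1] [m2 s2] _ _ /= [-> ->].
Qed.

Lemma tagged_mem (S : eqType) (T : S -> eqType) (s : seq S) (t : forall x, seq (T x)) p :
  p \in [seq Tagged T y | x <- s, y <- t x] -> tag p \in s /\ tagged p \in t (tag p).
Proof. by move=> /allpairsPdep [x [y [hx hy ->]]]. Qed.
Section S. Variables (F : fieldType) (A : algType F).
Lemma fps_mulA (u v w : fps A) n :
  fps_mul (fps_mul u v) w n = fps_mul u (fps_mul v w) n.
Proof.
pose P (f : fps A) := \poly_(i < n.+1) f i : {poly A}.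
have hP : forall f k, (k <= n)%N -> (P f)`_k = f k.
  by move=> f k hk; rewrite coef_poly ltnS hk.
have h : forall f g k, (k <= n)%N -> fps_mul f g k = (P f * P g)`_k.
  move=> f g k hk; rewrite coefM /fps_mul; apply: eq_bigr => i _.
  have hi : (i <= n)%N by apply: leq_trans hk; rewrite -ltnS.
  by rewrite !hP // (leq_trans (leq_subr _ _) hk).
have -> : fps_mul (fps_mul u v) w n = (P u * P v * P w)`_n.
  rewrite coefM /fps_mul; apply: eq_bigr => i _.
  have hi : (i <= n)%N by rewrite -ltnS.
  by rewrite -/(fps_mul u v i) h // hP ?leq_subr.
have -> : fps_mul u (fps_mul v w) n = (P u * (P v * P w))`_n.
  rewrite coefM /fps_mul; apply: eq_bigr => i _.
  have hi : (i <= n)%N by rewrite -ltnS.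
  by rewrite hP // -h ?leq_subr.
by rewrite mulrA.
Qed.
Lemma prod_rule (u v U V : nat -> A) n :
  (forall i, u i.+1 *+ i.+1 = U i) -> (forall i, v i.+1 *+ i.+1 = V i) ->
  fps_mul u v n.+1 *+ n.+1 = fps_mul U v n + fps_mul u V n.
Proof.
move=> hu hv; rewrite /fps_mul -sumrMnl.
have -> : \sum_(i < n.+2) u i * v (n.+1 - i)%N *+ n.+1 =
  \sum_(i < n.+2) (u i *+ i * v (n.+1 - i)%N) + \sum_(i < n.+2) (u i * v (n.+1 - i)%N *+ (n.+1 - i)).
  rewrite -big_split /=; apply: eq_bigr => i _.
  by rewrite mulrnAl -mulrnDr subnKC // -ltnS.
congr (_ + _).
  rewrite big_ord_recl /= mulr0n mul0r add0r; apply: eq_bigr => i _.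
  by rewrite /bump /= add1n subSS hu.
rewrite big_ord_recr /= subnn mulr0n addr0; apply: eq_bigr => i _.
by rewrite -mulrnAr subSn -1?ltnS // hv.
Qed.

Variable (charF0 : [pchar F] =i pred0) (X Y : A).

Lemma natF_neq0 k : (k.+1%:R : F) != 0.
Proof. by have /pcharf0P -> := charF0. Qed.

Lemma cancel_mulrn (x y : A) k : x *+ k.+1 = y *+ k.+1 -> x = y.
Proof.
rewrite -!scaler_nat => h.
have := congr1 (fun z => (k.+1%:R : F)^-1 *: z) h.
by rewrite /= !scalerA mulVf ?natF_neq0 // !scale1r.
Qed.

Lemma exp_der (Z : A) i : fps_exp Z i.+1 *+ i.+1 = Z * fps_exp Z i.
Proof.
rewrite /fps_exp -scaler_nat scalerA factS natrM invfM mulrA divff ?natF_neq0 //.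
by rewrite mul1r exprS scalerAr.
Qed.

Lemma exp_comm i : X * fps_exp X i = fps_exp X i * X.
Proof. by rewrite /fps_exp -scalerAr -scalerAl -exprS -exprSr. Qed.

Lemma ad_scale c B : ad X (c *: B) = c *: ad X B.
Proof. by rewrite /ad -scalerAr -scalerAl scalerBr. Qed.

Definition ee m : A := ((m`!%:R : F)^-1) *: iter m (ad X) (X + Y).

Lemma ee_der m : ee m.+1 *+ m.+1 = ad X (ee m).
Proof.
rewrite /ee -scaler_nat scalerA factS natrM invfM mulrA divff ?natF_neq0 //.
by rewrite mul1r iterS ad_scale.
Qed.

Lemma ee_exp k : fps_mul ee (fps_exp X) k = fps_exp X k * (X + Y).
Proof.
elim: k => [|k IH].
  by rewrite /fps_mul big_ord1 /ee /fps_exp /= !invr1 !scale1r mulr1 mul1r.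
apply: (@cancel_mulrn _ _ k).
rewrite (prod_rule (U := fun i => ad X (ee i)) (V := fun i => X * fps_exp X i)); last 2 first.
- exact: ee_der.
- exact: exp_der.
have -> : fps_mul (fun i => ad X (ee i)) (fps_exp X) k + fps_mul ee (fun i => X * fps_exp X i) k
   = X * fps_mul ee (fps_exp X) k.
  rewrite /fps_mul -big_split mulr_sumr /=; apply: eq_bigr => i _.
  by rewrite /ad mulrBl mulrA -!mulrA subrK.
by rewrite IH mulrA -exp_der mulrnAl.
Qed.

Definition cc := fps_mul (fps_exp X) (fps_exp Y).

Lemma cc_rec n : cc n.+1 *+ n.+1 = \sum_(m < n.+1) ee m * cc (n - m)%N.
Proof.
rewrite /cc (prod_rule (U := fun i => X * fps_exp X i) (V := fun i => Y * fps_exp Y i)); last 2 first.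
- exact: exp_der.
- exact: exp_der.
have -> : fps_mul (fun i => X * fps_exp X i) (fps_exp Y) n + fps_mul (fps_exp X) (fun i => Y * fps_exp Y i) n
   = fps_mul (fps_mul ee (fps_exp X)) (fps_exp Y) n.
  rewrite /fps_mul -big_split /=; apply: eq_bigr => i _.
  rewrite -/(fps_mul ee (fps_exp X) i) ee_exp exp_comm.
  by rewrite mulrDr mulrDl !mulrA.
by rewrite fps_mulA.
Qed.

Definition dc k := Dn X Y k k.

Lemma Dn_eq k m : Dn X Y k m = if m == k then dc k else 0.
Proof. by rewrite /dc /Dn eqxx; case: eqP => // ->. Qed.

Lemma prodD s k : fps_prod (map (Dn X Y) s) k =
  if k == sumn s then \prod_(x <- s) dc x else 0.
Proof.
elim: s k => [|x s IH] k /=; first by rewrite /fps_one big_nil.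
rewrite /fps_mul.
rewrite (eq_bigr (fun i : 'I_k.+1 => if (i == x :> nat) then dc x * fps_prod (map (Dn X Y) s) (k - i)%N else 0)); last first.
  by move=> i _; rewrite Dn_eq; case: eqP => _; rewrite ?mul0r.
rewrite -big_mkcond (big_ord1_eq _ (fun j => dc x * fps_prod (map (Dn X Y) s) (k - j)%N)) big_cons.
case: ltnP => hx.
  rewrite IH; have -> : ((k - x)%N == sumn s) = (k == x + sumn s)%N.
    by apply/eqP/eqP; lia.
  by case: eqP; rewrite ?mulr0.
by case: eqP => //; lia.
Qed.

Lemma denom_cons m s : denom (m :: s) = ((m + sumn s) * denom s)%N.
Proof. by rewrite /denom /= big_ord_recl. Qed.

Definition term s : A := ((denom s)%:R : F)^-1 *: \prod_(x <- s) dc x.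

Lemma bchE s k : bch_term X Y s k = if k == sumn s then term s else 0.
Proof. by rewrite /bch_term /fps_scale prodD; case: eqP; rewrite ?scaler0. Qed.

Lemma cc0 : cc 0 = 1.
Proof. by rewrite /cc /fps_mul big_ord1 /fps_exp /= !invr1 !scale1r mulr1. Qed.

Lemma term_nil : term [::] = 1.
Proof. by rewrite /term /denom big_ord0 big_nil invr1 scale1r. Qed.


Lemma gsum f n : (n <= f)%N -> \sum_(s <- comps f n) term s = cc n.
Proof.
elim: f n => [|f IH] n hn.
  by move: hn; rewrite leqn0 => /eqP -> /=; rewrite big_seq1 term_nil cc0.
case: n hn => [|n] hn; first by rewrite /= big_seq1 term_nil cc0.
have -> : comps f.+1 n.+1 = [seq m :: s | m <- iota 1 n.+1, s <- comps f (n.+1 - m)] by [].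
rewrite big_allpairs_dep.
transitivity (\sum_(m <- iota 1 n.+1) (n.+1%:R : F)^-1 *: (dc m * cc (n.+1 - m)%N)).
  apply: eq_big_seq => m; rewrite mem_iota => /andP [m1 m2].
  rewrite -IH; last by lia.
  rewrite mulr_sumr scaler_sumr; apply: eq_big_seq => s hs.
  have /andP [hall /eqP e] := comps_sound hs.
  rewrite /term denom_cons big_cons e natrM invfM -scalerA scalerAr.
  by rewrite subnKC // -ltnS.
rewrite -scaler_sumr.
have -> : cc n.+1 = (n.+1%:R : F)^-1 *: (cc n.+1 *+ n.+1).
  by rewrite -scaler_nat scalerA mulVf ?natF_neq0 // scale1r.
rewrite cc_rec; congr (_ *: _).
rewrite -[iota 1 n.+1]/(iota (1 + 0) n.+1) iotaDl big_map -[iota 0 n.+1]/(index_iota 0 n.+1) big_mkord.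
apply: eq_bigr => i _.
by rewrite add1n subSS /dc /Dn eqxx.
Qed.
End S.

Theorem theorem4p1 (F : fieldType) (A : algType F)
  (charF0 : [pchar F] =i pred0) (X Y : A) :
  exists S : fps A,
    tadic_sum_to valid_index (bch_term X Y) S /\
    fps_mul (fps_exp X) (fps_exp Y) = fps_add (fps_one A) S.
Proof.
exists (fun N => cc X Y N - fps_one A N); split; last first.
  by apply: functional_extensionality => N; rewrite /fps_add addrC subrK.
move=> N.
exists [seq s | n <- iota 1 N, s <- comps N n]; split.
- apply: allpairs_uniq_dep; first exact: iota_uniq.
    by move=> n _; apply: comps_uniq.
  move=> p1 p2 /tagged_mem [_ h1] /tagged_mem [_ h2] /= e.
  have /andP [_ /eqP e1] := comps_sound h1.
  have /andP [_ /eqP e2] := comps_sound h2.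
  move: p1 p2 h1 h2 e e1 e2 => [n1 s1] [n2 s2] /= _ _ es.
  by rewrite es => <- <-.
- apply/allP => s /allpairsPdep [n [s' [hn hs' ->]]].
  have /andP [hall /eqP e] := comps_sound hs'.
  move: hn; rewrite mem_iota => /andP [n1 _].
  rewrite /valid_index hall andbT.
  by case: s' e {hs' hall} => [|? ?] //= e; lia.
- move=> s /andP [hsz hall] hnot k hk.
  rewrite bchE; case: eqP => // ek.
  case/negP: hnot; apply/allpairsPdep; exists (sumn s), s; split => //.
    rewrite mem_iota; apply/andP; split; last by lia.
    by case: s hsz hall {ek} => [|x s] //= _ /andP [hx _]; lia.
  by apply: comps_complete => //; lia.
- rewrite big_allpairs_dep /=.
  rewrite (eq_big_seq (fun n => if N == n then cc X Y N else 0)); last first.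
    move=> n hn; case: eqP => [<-|ne].
      rewrite -(gsum charF0 X Y (leqnn N)); apply: eq_big_seq => s hs.
      by have /andP [_ /eqP e] := comps_sound hs; rewrite bchE e eqxx.
    rewrite big1_seq // => s /andP [_ hs].
    by have /andP [_ /eqP e] := comps_sound hs; rewrite bchE e; case: eqP.
  case: N => [|N]; first by rewrite big_nil (cc0 X Y) /fps_one subrr.
  rewrite /fps_one subr0 -[iota 1 N.+1]/(index_iota 1 N.+2) big_nat_recr //= eqxx.
  rewrite big1_seq ?add0r // => n /andP [_]; rewrite mem_index_iota => hn.
  by case: eqP => //; lia.
Qed.
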